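(* Let $X$ be a finite connected poset and $\theta:B\to B$ a bijection. Then $\theta$ is admissible if and only if $s^+_{\theta,\Gamma}(z)-s^-_{\theta,\Gamma}(z)=t^+_{\theta,\Gamma}(z)-t^-_{\theta,\Gamma}(z)$ holds for every cycle $\Gamma$ in $X$ and every $z\in X$.
   Context: For $x<y$ let $e_{xy}$ denote the pair/basis symbol indexed by $(x,y)$ and $B=\{e_{xy}:x<y\}$. A walk in $X$ is a sequence $u_0,\dots,u_m$ such that for each $i$ one of $u_i,u_{i+1}$ covers the other; it is closed if $u_0=u_m$; a cycle is a closed walk $u_0,\dots,u_m=u_0$ with $m\ge4$ and $u_i\ne u_j$ for all $i\ne j$ other than $\{i,j\}=\{0,m\}$. $X$ is connected if any two elements are joined by a walk. For a closed walk $\Gamma:u_0,\dots,u_m=u_0$ and $z\in X$: $s^+_{\theta,\Gamma}(z)$ is the number of $i$ with $u_i<u_{i+1}$ such that $\theta(e_{zw})=e_{u_iu_{i+1}}$ for some $w>z$; $s^-_{\theta,\Gamma}(z)$ the number of $i$ with $u_i>u_{i+1}$ such that $\theta(e_{zw})=e_{u_{i+1}u_i}$ for some $w>z$; $t^+_{\theta,\Gamma}(z)$ the number of $i$ with $u_i<u_{i+1}$ such that $\theta(e_{wz})=e_{u_iu_{i+1}}$ for some $w<z$; $t^-_{\theta,\Gamma}(z)$ the number of $i$ with $u_i>u_{i+1}$ such that $\theta(e_{wz})=e_{u_{i+1}u_i}$ for some $w<z$. $\theta$ is admissible if $s^+_{\theta,\Gamma}(z)-s^-_{\theta,\Gamma}(z)=t^+_{\theta,\Gamma}(z)-t^-_{\theta,\Gamma}(z)$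 for every closed walk $\Gamma$ and every $z\in X$. *)

(* Defs.v *)
From mathcomp Require Import all_boot all_order all_algebra.
Set Implicit Arguments. Unset Strict Implicit. Unset Printing Implicit Defensive.
Import Order.Theory.
Local Open Scope order_scope.

Section Defs.
Context {d : Order.disp_t} {X : finPOrderType d}.

Definition covers (x y : X) : bool :=
  (x < y) && [forall z : X, ~~ ((x < z) && (z < y))].

Definition adj (x y : X) : bool := covers x y || covers y x.

Definition B : Type := {p : X * X | p.1 < p.2}.

(* a walk u_0, u_1, ..., u_m is represented by u_0 and s = [:: u_1; ...; u_m] *)
Definition is_walk (u0 : X) (s : seq X) : bool := path adj u0 s.
Definition is_closed_walk (u0 : X) (s : seq X) : bool :=
  is_walk u0 s && (last u0 s == u0).
Definition is_cycle (u0 : X) (s : seq X) : bool :=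
  is_closed_walk u0 s && (4 <= size s)%N && uniq s.

Definition connected_poset : Prop :=
  forall x y : X, exists s : seq X, is_walk x s && (last x s == y).

Definition wu (u0 : X) (s : seq X) (i : nat) : X := nth u0 (u0 :: s) i.

Variable theta : B -> B.

Definition hits_from (z a b : X) : bool :=
  [exists w : B, ((val w).1 == z) && (val (theta w) == (a, b))].
Definition hits_to (z a b : X) : bool :=
  [exists w : B, ((val w).2 == z) && (val (theta w) == (a, b))].

Definition s_plus (u0 : X) (s : seq X) (z : X) : nat :=
  count (fun i => (wu u0 s i < wu u0 s i.+1) && hits_from z (wu u0 s i) (wu u0 s i.+1))
        (iota 0 (size s)).
Definition s_minus (u0 : X) (s : seq X) (z : X) : nat :=
  count (fun i => (wu u0 s i.+1 < wu u0 s i) && hits_from z (wu u0 s i.+1) (wu u0 s i))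
        (iota 0 (size s)).
Definition t_plus (u0 : X) (s : seq X) (z : X) : nat :=
  count (fun i => (wu u0 s i < wu u0 s i.+1) && hits_to z (wu u0 s i) (wu u0 s i.+1))
        (iota 0 (size s)).
Definition t_minus (u0 : X) (s : seq X) (z : X) : nat :=
  count (fun i => (wu u0 s i.+1 < wu u0 s i) && hits_to z (wu u0 s i.+1) (wu u0 s i))
        (iota 0 (size s)).

Definition balanced (u0 : X) (s : seq X) (z : X) : Prop :=
  ((s_plus u0 s z)%:Z - (s_minus u0 s z)%:Z =
   (t_plus u0 s z)%:Z - (t_minus u0 s z)%:Z)%R.

Definition admissible : Prop :=
  forall (u0 : X) (s : seq X), is_closed_walk u0 s -> forall z : X, balanced u0 s z.

End Defs.

(* Main.v *)
Require Import Defs.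
From mathcomp Require Import all_boot all_order all_algebra.
From mathcomp Require Import zify ring.
Import Order.Theory GRing.Theory.

Section Aux.
Context {d : Order.disp_t} {X : finPOrderType d}.
Variable theta : @B d X -> @B d X.

Definition cnt (Q : X -> X -> bool) (u0 : X) (s : seq X) : nat :=
  count (fun i => Q (wu u0 s i) (wu u0 s i.+1)) (iota 0 (size s)).

Lemma cntS Q u0 x s : cnt Q u0 (x :: s) = (Q u0 x + cnt Q x s)%N.
Proof.
rewrite /cnt /= (iotaDl 1 0 (size s) : iota 1 _ = _) count_map; congr (_ + _)%N.
apply: eq_in_count => i; rewrite mem_iota add0n => /andP [_ Hi] /=.
rewrite /wu add1n /=; congr (Q _ _).
  by case: i Hi => [|i] Hi //=; apply: set_nth_default; apply: ltnW.
by apply: set_nth_default.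
Qed.

Definition g (z x y : X) : int :=
  ((nat_of_bool ((x < y)%O && hits_from theta z x y))%:Z
   - (nat_of_bool ((y < x)%O && hits_from theta z y x))%:Z
   - (nat_of_bool ((x < y)%O && hits_to theta z x y))%:Z
   + (nat_of_bool ((y < x)%O && hits_to theta z y x))%:Z)%R.

Fixpoint W (z u0 : X) (s : seq X) : int :=
  match s with [::] => 0%R | x :: s' => (g z u0 x + W z x s')%R end.

Lemma W_spec z u0 s :
  W z u0 s = (((s_plus theta u0 s z)%:Z - (s_minus theta u0 s z)%:Z)
             - ((t_plus theta u0 s z)%:Z - (t_minus theta u0 s z)%:Z))%R.
Proof.
elim: s u0 => [|x s IH] u0 //=.
have -> : s_plus theta u0 (x :: s) z =
  cnt (fun a b => (a < b)%O && hits_from theta z a b) u0 (x :: s) by [].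
have -> : s_minus theta u0 (x :: s) z =
  cnt (fun a b => (b < a)%O && hits_from theta z b a) u0 (x :: s) by [].
have -> : t_plus theta u0 (x :: s) z =
  cnt (fun a b => (a < b)%O && hits_to theta z a b) u0 (x :: s) by [].
have -> : t_minus theta u0 (x :: s) z =
  cnt (fun a b => (b < a)%O && hits_to theta z b a) u0 (x :: s) by [].
rewrite !cntS IH /g /cnt !PoszD.
rewrite /s_plus /s_minus /t_plus /t_minus.
lia.
Qed.

Lemma g_anti z x y : g z x y = (- g z y x)%R.
Proof. rewrite /g; lia. Qed.

Lemma W_cat z u0 s1 s2 : W z u0 (s1 ++ s2) = (W z u0 s1 + W z (last u0 s1) s2)%R.
Proof. elim: s1 u0 => [|x s IH] u0 /=; first by rewrite add0r. by rewrite IH addrA. Qed.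

Lemma covers_lt {a b : X} : covers a b -> (a < b)%O.
Proof. by case/andP. Qed.

Lemma covers_nb {a b c : X} : covers a c -> (a < b)%O -> (b < c)%O -> False.
Proof.
case/andP=> _ /forallP /(_ b) H ab bc. by rewrite ab bc in H.
Qed.

Lemma no_triangle {u x y : X} : adj u x -> adj x y -> adj y u -> False.
Proof.
rewrite /adj => /orP [] H1 /orP [] H2 /orP [] H3;
match goal with
| H : is_true (covers ?a ?c), H1 : is_true (covers ?a ?b), H2 : is_true (covers ?b ?c) |- _ =>
    exact: (covers_nb H (covers_lt H1) (covers_lt H2))
| H1 : is_true (covers ?a ?b), H2 : is_true (covers ?b ?c), H3 : is_true (covers ?c ?a) |- _ =>
    have := lt_trans (lt_trans (covers_lt H1) (covers_lt H2)) (covers_lt H3);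
    by rewrite ltxx
end.
Qed.

Lemma adj_irr (u : X) : adj u u = false.
Proof. by rewrite /adj /covers ltxx. Qed.

Lemma nonuniq_split {s : seq X} : ~~ uniq s ->
  exists a v b1 b2, s = a ++ v :: b1 ++ v :: b2.
Proof.
elim: s => [|x s IH] //=; rewrite negb_and negbK => /orP [Hx|Hu].
  case/splitPr: Hx => b1 b2. by exists [::], x, b1, b2.
case: (IH Hu) => a [v [b1 [b2 ->]]]. by exists (x :: a), v, b1, b2.
Qed.

Lemma main z : (forall u0 s, is_cycle u0 s -> W z u0 s = 0%R) ->
  forall n u0 s, (size s <= n)%N -> is_closed_walk u0 s -> W z u0 s = 0%R.
Proof.
move=> Hc; elim=> [|n IH] u0 s.
  by rewrite leqn0 => /nilP ->.
move=> Hs Hw.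
case Hu: (uniq s).
  case: s Hs Hw Hu => [|x [|y [|w [|t s]]]] Hs Hw Hu //.
  - move: Hw; rewrite /is_closed_walk /is_walk /= andbT => /andP [Ha /eqP E].
    by rewrite E adj_irr in Ha.
  - move: Hw; rewrite /is_closed_walk /is_walk /= andbT => /andP [_ /eqP ->].
    by rewrite addr0 g_anti addNr.
  - move: Hw; rewrite /is_closed_walk /is_walk /= andbT => /andP [/and3P [A1 A2 A3] /eqP E].
    by rewrite E in A3; case: (no_triangle A1 A2 A3).
  - apply: Hc; by rewrite /is_cycle Hw Hu.
case: (nonuniq_split (negbT Hu)) => a [v [b1 [b2 Es]]].
move: Hs Hw; rewrite Es => Hs Hw.
have E1 : W z u0 (a ++ v :: b1 ++ v :: b2) =
          (W z u0 (a ++ v :: b2) + W z v (rcons b1 v))%R.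
  rewrite !W_cat /= W_cat -cats1 W_cat /= addr0.
  move: (g z (last u0 a) v) (W z u0 a) (W z v b1) (g z (last v b1) v) (W z v b2).
  move=> p q r t w; ring.
move: Hw; rewrite /is_closed_walk /is_walk cat_path /= cat_path /= last_cat /= last_cat /=.
case/andP=> /and5P [P1 P2 P3 P4 P5] /eqP L.
rewrite E1 (IH u0 (a ++ v :: b2)) ?(IH v (rcons b1 v)) ?addr0 //.
- move: Hs; rewrite size_rcons !size_cat /= !size_cat /=; lia.
- by rewrite /is_closed_walk /is_walk rcons_path P3 P4 last_rcons eqxx.
- move: Hs; rewrite !size_cat /= !size_cat /=; lia.
- by rewrite /is_closed_walk /is_walk cat_path /= P1 P2 P5 last_cat /= L eqxx.
Qed.

End Aux.

Theorem lemma5p13 (d : Order.disp_t) (X : finPOrderType d)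
  (theta : @B d X -> @B d X) :
  @connected_poset d X -> bijective theta ->
  (admissible theta <->
   forall (u0 : X) (s : seq X), is_cycle u0 s -> forall z : X, balanced theta u0 s z).
Proof.
move=> _ _; split.
  move=> H u0 s /andP [/andP [Hw _] _] z; exact: H.
move=> H u0 s Hw z.
have Hb : forall u s, balanced theta u s z <-> W theta z u s = 0%R.
  move=> u t; rewrite /balanced W_spec; split; [move=> ->; lia | lia].
apply/Hb; apply: (@main _ _ theta z _ (size s)) => //.
by move=> u t Ht; apply/Hb; apply: H.
Qed.
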